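(* Let $R$ be a field, $S$ an idempotent semifield and $v:R\to S$ a B\'ezout valuation. Then $v$ is surjective if and only if its restriction $v^\circ:R^\circ\to S^\circ$ is surjective.
   Context: An idempotent semiring is commutative with $a+a=a$, ordered by $a\le b$ iff $a+b=b$; a semifield has nonzero elements invertible. A valuation $v:R\to S$ satisfies $v(0)=0$, $v(1)=v(-1)=1$, $v(ab)=v(a)v(b)$, $v(a+b)\le v(a)+v(b)$, $v(a)\ne0$ for $a\ne0$. $R^\circ=\{a\in R:v(a)\le1\}$, $S^\circ=\{x\in S:x\le1\}$. $v$ is B\'ezout if for all $a,b\in R$ there are $x,y\in R^\circ$ with $v(xa+yb)=v(a)+v(b)$. *)

(* Defs.v *)
From HB Require Import structures.
From mathcomp Require Import all_boot all_order all_algebra.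
Set Implicit Arguments. Unset Strict Implicit. Unset Printing Implicit Defensive.
Import GRing.Theory.
Local Open Scope ring_scope.

Definition idempotent_semiring (S : comNzSemiRingType) : Prop :=
  forall a : S, a + a = a.

Definition is_semifield (S : comNzSemiRingType) : Prop :=
  forall a : S, a != 0 -> exists b : S, a * b = 1.

Definition sle (S : comNzSemiRingType) (a b : S) : Prop := a + b = b.

Definition is_valuation (R : fieldType) (S : comNzSemiRingType) (v : R -> S) : Prop :=
  [/\ v 0 = 0, v 1 = 1, v (-1) = 1,
      (forall a b, v (a * b) = v a * v b) &
      [/\ (forall a b, sle (v (a + b)) (v a + v b)) &
           (forall a, a != 0 -> v a != 0)]].

Definition val_ring (R : fieldType) (S : comNzSemiRingType) (v : R -> S) (a : R) : Prop :=
  sle (v a) 1.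

Definition semi_unit_ball (S : comNzSemiRingType) (x : S) : Prop := sle x 1.

Definition bezout_valuation (R : fieldType) (S : comNzSemiRingType) (v : R -> S) : Prop :=
  forall a b : R, exists x y : R,
    [/\ val_ring v x, val_ring v y & v (x * a + y * b) = v a + v b].

Definition restr_surjective (R : fieldType) (S : comNzSemiRingType) (v : R -> S) : Prop :=
  forall s : S, semi_unit_ball s -> exists a : R, val_ring v a /\ v a = s.

(* Main.v *)
Require Import Defs.
From mathcomp Require Import all_boot all_order all_algebra.
Import GRing.Theory.
Local Open Scope ring_scope.

Theorem corollary2p16 (R : fieldType) (S : comNzSemiRingType) (v : R -> S) :
  idempotent_semiring S -> is_semifield S ->
  is_valuation v -> bezout_valuation v ->
  ((forall s : S, exists a : R, v a = s) <-> restr_surjective v).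
Proof.
move=> idem sf [v0 v1 vm1 vM [vD vnz]] _; split.
  move=> H s hs; have [a ha] := H s; exists a; split=> //.
  by rewrite /val_ring ha.
move=> H s.
pose t := s + 1.
have h1t : (1 : S) + t = t by rewrite /t addrC -addrA idem.
have hst : s + t = t by rewrite /t addrA idem.
have tnz : t != 0.
  apply/eqP=> t0; move: h1t.
  by rewrite t0 addr0 => /eqP; rewrite oner_eq0.
have [u tu] := sf t tnz.
have u1 : semi_unit_ball u.
  rewrite /semi_unit_ball /sle -tu.
  have e : t * u = (1 + t) * u by rewrite h1t.
  by rewrite {2}e [RHS]mulrDl mul1r.
have su1 : semi_unit_ball (s * u).
  rewrite /semi_unit_ball /sle -tu.
  have e : t * u = (s + t) * u by rewrite hst.
  by rewrite {2}e [RHS]mulrDl.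
have [c [_ vc]] := H u u1.
have [d [_ vd]] := H _ su1.
have cnz : c != 0.
  apply/eqP=> c0; move: vc; rewrite c0 v0 => u0.
  by move: tu; rewrite -u0 mulr0 => /eqP; rewrite eq_sym oner_eq0.
have vci : v c^-1 * u = 1 by rewrite -vc -vM mulVf // .
have tv : t = v c^-1 by rewrite -[LHS]mulr1 -vci mulrCA tu mulr1.
exists (d / c); rewrite vM vd -tv -mulrA (mulrC u) tu mulr1 //.
Qed.
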